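(* Let $m,n\ge1$, $q=2^m$, and let \[L(x)=\sum_{i=0}^{m-1}L_i\big(x^{2^i}\big),\] where each $L_i$ is a $q$-linear polynomial over $\mathbb F_{q^n}$. Then: (i) $L^\prime(\ker\mathrm{Tr})\subseteq\ker\mathrm{Tr}$ if and only if $L_i(1)\in\mathbb F_q$ for $0\le i<m$; in this case there exists a unique map $l$ on $\mathbb F_q$ such that $\mathrm{Tr}(L^\prime(x))=l(\mathrm{Tr}(x))$ for all $x\in\mathbb F_{q^n}$, namely \[l(x)=\sum_{i=0}^{m-1}(L_i(1)x)^{2^{m-i}};\] (ii) if $L^\prime(\ker\mathrm{Tr})\subseteq\ker\mathrm{Tr}$, then $L^\prime$ induces a well-defined endomorphism of the additive quotient group $\mathbb F_{q^n}/\ker\mathrm{Tr}$ via $\ker\mathrm{Tr}+\alpha\mapsto\ker\mathrm{Tr}+L^\prime(\alpha)$, and this endomorphism is an automorphism if and only if the map $l$ from (i) is a linear automorphism of $\mathbb F_q$ as a vector space over $\mathbb F_2$; (iii) $|L^\prime(\ker\mathrm{Tr})|=|\ker\mathrm{Tr}|$ if and only if $\ker\mathrm{Tr}\cap\ker L^\prime=\{0\}$.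
   Context: $\mathrm{Tr}$ denotes the trace map of $\mathbb F_{q^n}$ over $\mathbb F_q$. Polynomials are regarded as maps on $\mathbb F_{q^n}$. A $q$-linear polynomial over $\mathbb F_{q^n}$ has the form $\sum_{j=0}^{n-1}a_jx^{q^j}$ with $a_j\in\mathbb F_{q^n}$. For a $2$-linear polynomial $L(x)=\sum_{j=0}^{mn-1}a_jx^{2^j}$ over $\mathbb F_{q^n}$, its adjoint is $L^\prime(x)=\sum_{j}(a_jx)^{2^{-j}}$, where $y\mapsto y^{2^{-j}}$ is the inverse of the automorphism $y\mapsto y^{2^j}$ of $\mathbb F_{q^n}$. $\ker$ denotes the kernel of an additive map. *)

(* Defs.v *)
From HB Require Import structures.
From mathcomp Require Import all_boot all_order all_algebra all_field.
Set Implicit Arguments. Unset Strict Implicit. Unset Printing Implicit Defensive.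
Import GRing.Theory.
Local Open Scope ring_scope.

(* Setting: F is a finite field of characteristic 2 with #|F| = 2^(m*n),
   i.e. F = F_{q^n} with q = 2^m.  F_q is the subfield {x | x^q = x}. *)
Section Defs.
Variables (m n : nat) (F : finFieldType).

Definition Fq : {set F} := [set x : F | x ^+ (2 ^ m) == x].

Definition Tr (x : F) : F := \sum_(j < n) x ^+ (2 ^ (m * j)).

Definition KerTr : {set F} := [set x : F | Tr x == 0].

Definition qlin (c : nat -> F) (x : F) : F := \sum_(j < n) c j * x ^+ (2 ^ (m * j)).

(* a i j = coefficient of x^(q^j) in L_i ; L(x) = sum_{i<m} L_i(x^(2^i)) *)
Definition Li (a : nat -> nat -> F) (i : nat) : F -> F := qlin (a i).
Definition Lmap (a : nat -> nat -> F) (x : F) : F :=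
  \sum_(i < m) Li a i (x ^+ (2 ^ i)).

(* L written as a 2-linear polynomial sum_{k < mn} b_k x^(2^k):
   since 2^i q^j = 2^(i + m j), b_(i + m j) = a i j. *)
Definition Lcoef (a : nat -> nat -> F) (k : nat) : F := a (k %% m)%N (k %/ m)%N.

(* the inverse of the automorphism y |-> y^(2^k) of F (#|F| = 2^(mn)) *)
Definition frobinv (k : nat) (y : F) : F := y ^+ (2 ^ (m * n - k %% (m * n))).

(* adjoint L'(x) = sum_k (b_k x)^(2^-k) *)
Definition Ladj (a : nat -> nat -> F) (x : F) : F :=
  \sum_(k < m * n) frobinv k (Lcoef a k * x).

Definition KerLadj (a : nat -> nat -> F) : {set F} := [set x : F | Ladj a x == 0].

Definition lmap (a : nat -> nat -> F) (x : F) : F :=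
  \sum_(i < m) (Li a i 1 * x) ^+ (2 ^ (m - i)).

(* The map K + alpha |-> K + f alpha on the additive quotient F / K is well defined *)
Definition induced_well_defined (K : {set F}) (f : F -> F) : Prop :=
  forall a b : F, a - b \in K -> f a - f b \in K.

(* ... and is bijective (an automorphism of the quotient group): injective and
   surjective on cosets *)
Definition induced_bijective (K : {set F}) (f : F -> F) : Prop :=
  (forall a b : F, f a - f b \in K -> a - b \in K) /\
  (forall b : F, exists a : F, f a - b \in K).

(* f is an F_2-linear automorphism of the F_2-space S (F_2-linear = additive) *)
Definition F2_lin_aut (S : {set F}) (f : F -> F) : Prop :=
  [/\ {in S, forall x, f x \in S},
      {in S &, forall x y, f (x + y) = f x + f y},
      {in S &, injective f} &
      {in S, forall y, exists2 x, x \in S & f x = y}].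

End Defs.

(* Main.v *)
Require Import Defs.
From HB Require Import structures.
From mathcomp Require Import all_boot all_order all_algebra all_field.
From mathcomp Require Import zify.
Import GRing.Theory.
Local Open Scope ring_scope.

Lemma poly_sparse (F : finFieldType) (I : finType) (b : I -> F) (e : I -> nat) :
  injective e -> (forall k, e k < #|F|)%N ->
  (forall z : F, \sum_k b k * z ^+ (e k) = 0) -> forall k, b k = 0.
Proof.
move=> einj ebd hz k0.
pose p : {poly F} := \sum_k b k *: 'X^(e k).
have p0 : p = 0.
  apply: (@roots_geq_poly_eq0 _ p (enum F)).
  - apply/allP => z _; rewrite /root /p horner_sum.
    rewrite (eq_bigr (fun k => b k * z ^+ e k)) ?hz // => k _.
    by rewrite hornerZ hornerXn.
  - exact: enum_uniq.
  - rewrite -cardE; apply: (leq_trans (size_sum _ _ _)).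
    apply/bigmax_leqP => k _.
    apply: (leq_trans (size_scale_leq _ _)); rewrite size_polyXn; exact: ebd.
have := congr1 (fun q : {poly F} => q`_(e k0)) p0.
rewrite /= coef0 /p coef_sumMXn (big_pred1 k0) //.
by move=> k /=; apply/eqP/eqP => [/einj|->].
Qed.
Section S.
Variables (m n : nat) (F : finFieldType).
Hypotheses (Hm : (0 < m)%N) (Hn : (0 < n)%N)
  (Hchar : 2%N \in [pchar F]) (Hcard : #|F| = (2 ^ (m * n))%N).

Lemma frobD k (x y : F) : (x + y) ^+ (2 ^ k) = x ^+ (2 ^ k) + y ^+ (2 ^ k).
Proof.
elim: k => [|k IH]; first by rewrite !expn0 !expr1.
by rewrite expnSr !exprM IH -!(pFrobenius_autE Hchar) rmorphD.
Qed.

Lemma frob0 k : (0 : F) ^+ (2 ^ k) = 0.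
Proof. by rewrite expr0n expn_eq0. Qed.

Lemma frob_sum k (I : Type) (r : seq I) (P : pred I) (f : I -> F) :
  (\sum_(i <- r | P i) f i) ^+ (2 ^ k) = \sum_(i <- r | P i) (f i) ^+ (2 ^ k).
Proof. apply: (big_morph (fun x : F => x ^+ (2 ^ k))); [exact: frobD | exact: frob0]. Qed.

Lemma frob_full (x : F) : x ^+ (2 ^ (m * n)) = x.
Proof. by rewrite -Hcard expf_card. Qed.

Lemma frob_iter (x : F) t : x ^+ ((2 ^ (m * n)) ^ t) = x.
Proof. by elim: t => [|t IH]; rewrite ?expr1 // expnS exprM frob_full. Qed.

Lemma frob_mod (x : F) k : x ^+ (2 ^ k) = x ^+ (2 ^ (k %% (m * n))).
Proof.
by rewrite {1}(div.divn_eq k (m * n)) expnD (mulnC (k %/ _)%N) expnM exprM frob_iter.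
Qed.

Lemma inFq (w : F) : (w \in Fq m F) = (w ^+ (2 ^ m) == w).
Proof. by rewrite inE. Qed.

Lemma fq_iter (w : F) t : w \in Fq m F -> w ^+ ((2 ^ m) ^ t) = w.
Proof.
rewrite inFq => /eqP hw.
by elim: t => [|t IH]; rewrite ?expr1 // expnS exprM hw.
Qed.

Lemma fq_pow (w : F) t r : w \in Fq m F -> w ^+ (2 ^ (m * t + r)) = w ^+ (2 ^ r).
Proof. by move=> hw; rewrite expnD expnM exprM fq_iter. Qed.

Lemma fqD (x y : F) : x \in Fq m F -> y \in Fq m F -> x + y \in Fq m F.
Proof. by rewrite !inFq frobD => /eqP -> /eqP ->. Qed.

Lemma fqM (x y : F) : x \in Fq m F -> y \in Fq m F -> x * y \in Fq m F.
Proof. by rewrite !inFq exprMn => /eqP -> /eqP ->. Qed.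

Lemma fqV (x : F) : x \in Fq m F -> x^-1 \in Fq m F.
Proof. by rewrite !inFq exprVn => /eqP ->. Qed.

Lemma fqX (x : F) k : x \in Fq m F -> x ^+ k \in Fq m F.
Proof. by rewrite !inFq exprAC => /eqP ->. Qed.

Lemma fq0 : (0 : F) \in Fq m F.
Proof. by rewrite inFq frob0. Qed.

Lemma fq_sum (I : Type) (r : seq I) (P : pred I) (f : I -> F) :
  (forall i, P i -> f i \in Fq m F) -> \sum_(i <- r | P i) f i \in Fq m F.
Proof. move=> h; apply: (big_ind (fun x => x \in Fq m F)) => //; [exact: fq0 | exact: fqD]. Qed.

Local Notation Tr := (Tr m n (F:=F)).

Lemma TrD x y : Tr (x + y) = Tr x + Tr y.
Proof. by rewrite /Defs.Tr -big_split; apply: eq_bigr => j _; rewrite frobD. Qed.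

Lemma Tr0 : Tr 0 = 0.
Proof. by rewrite /Defs.Tr big1 // => j _; rewrite frob0. Qed.

Lemma TrB x y : Tr (x - y) = Tr x - Tr y.
Proof. by rewrite !(GRing.subr_pchar2 Hchar) TrD. Qed.

Lemma Tr_sum (I : Type) (r : seq I) (P : pred I) (f : I -> F) :
  Tr (\sum_(i <- r | P i) f i) = \sum_(i <- r | P i) Tr (f i).
Proof. apply: (big_morph Tr); [exact: TrD | exact: Tr0]. Qed.

Lemma Tr_frob y s : Tr (y ^+ (2 ^ s)) = (Tr y) ^+ (2 ^ s).
Proof. by rewrite /Defs.Tr frob_sum; apply: eq_bigr => j _; rewrite exprAC. Qed.

Lemma TrFq y : Tr y \in Fq m F.
Proof.
rewrite inFq /Defs.Tr frob_sum; apply/eqP.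
move: (frob_full y); case: n Hn => // n' _ hf.
rewrite big_ord_recr big_ord_recl /=.
rewrite -exprM -expnD -mulnSr hf addrC muln0 expn0 expr1.
by congr (_ + _); apply: eq_bigr => j _; rewrite -exprM -expnD -mulnSr /bump add1n.
Qed.

Lemma Tr_q y : Tr (y ^+ (2 ^ m)) = Tr y.
Proof. by rewrite Tr_frob; apply/eqP; rewrite -inFq TrFq. Qed.

Lemma TrZ w y : w \in Fq m F -> Tr (w * y) = w * Tr y.
Proof.
move=> hw; rewrite /Defs.Tr mulr_sumr; apply: eq_bigr => j _.
by rewrite exprMn expnM (fq_iter _ _ hw).
Qed.

Lemma Tr_nondeg d : (forall z, Tr (d * z) = 0) -> d = 0.
Proof.
move=> h.
have := @poly_sparse F 'I_n (fun j => d ^+ (2 ^ (m * j))) (fun j => 2 ^ (m * j))%N.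
move=> /(_ _ _ _ (Ordinal Hn)); rewrite /= muln0 expn0 expr1; apply.
- move=> i j /eqP; rewrite eqn_exp2l // eqn_pmul2l // => /eqP; exact: ord_inj.
- by move=> j; rewrite Hcard ltn_exp2l // ltn_pmul2l.
- move=> z; rewrite -[RHS](h z) /Defs.Tr; apply: eq_bigr => j _; by rewrite exprMn.
Qed.

Lemma Tr_surj y : y \in Fq m F -> exists x, Tr x = y.
Proof.
move=> hy.
have [x0 hx0] : exists x0, Tr x0 != 0.
  case: (pickP (fun x => Tr x != 0)) => [x0 hx0 | hn]; first by exists x0.
  have : (1 : F) = 0 by apply: Tr_nondeg => z; apply/eqP; apply: negbFE; apply: hn.
  by move/eqP; rewrite oner_eq0.
exists (y / Tr x0 * x0); rewrite TrZ ?divfK //.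
by apply: fqM => //; apply: fqV; apply: TrFq.
Qed.


Lemma sum_split (f : nat -> F) N :
  \sum_(k < m * N) f k = \sum_(j < N) \sum_(i < m) f (i + m * j)%N.
Proof.
elim: N => [|N IH]; first by rewrite muln0 !big_ord0.
rewrite big_ord_recr /= -IH mulnS addnC -!(big_mkord xpredT).
rewrite (big_cat_nat _ (leq_addr m (m * N))) //=.
congr (_ + _).
by rewrite -{1}(add0n (m * N)%N) big_addn addKn big_mkord.
Qed.

Lemma Ladj_split (a : nat -> nat -> F) (x : F) : Ladj m n a x =
  \sum_(j < n) \sum_(i < m) (a i j * x) ^+ (2 ^ (m * n - (i + m * j))).
Proof.
rewrite /Ladj (sum_split (fun k => frobinv m n k (Lcoef m a k * x))); apply: eq_bigr => j _; apply: eq_bigr => i _.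
have hi := ltn_ord i; have hj := ltn_ord j.
have hlt : (i + m * j < m * n)%N.
  apply: (@leq_trans (m * j.+1)); first by rewrite mulnS; lia.
  by rewrite leq_pmul2l.
rewrite /frobinv /Lcoef (modn_small hlt); congr ((a _ _ * x) ^+ _).
- by rewrite addnC mulnC modnMDl; apply: modn_small.
- by rewrite addnC mulnC divnMDl // (divn_small hi) addn0.
Qed.

Lemma Li1 (a : nat -> nat -> F) i : Li m n a i 1 = \sum_(j < n) a i j.
Proof. by rewrite /Li /qlin; apply: eq_bigr => j _; rewrite expr1n mulr1. Qed.

Lemma TrL (a : nat -> nat -> F) (x : F) : Tr (Ladj m n a x) =
  \sum_(i < m) (Tr (Li m n a i 1 * x)) ^+ (2 ^ (m - i)).
Proof.
rewrite Ladj_split Tr_sum; under eq_bigr do rewrite Tr_sum.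
rewrite exchange_big /=; apply: eq_bigr => i _.
rewrite Li1 mulr_suml Tr_sum frob_sum; apply: eq_bigr => j _.
rewrite Tr_frob.
have hi := ltn_ord i; have hj := ltn_ord j.
have -> : (m * n - (i + m * j) = m * (n - j.+1) + (m - i))%N.
  have h1 : (m * j.+1 <= m * n)%N by rewrite leq_pmul2l.
  rewrite mulnBr; move: h1; rewrite mulnS; lia.
by rewrite fq_pow // TrFq.
Qed.

Lemma TrL_l (a : nat -> nat -> F) : (forall i, (i < m)%N -> Li m n a i 1 \in Fq m F) ->
  forall x, Tr (Ladj m n a x) = lmap m n a (Tr x).
Proof.
move=> hc x; rewrite TrL /lmap; apply: eq_bigr => i _.
by rewrite TrZ // hc.
Qed.

Lemma lmapD (a : nat -> nat -> F) (x y : F) : lmap m n a (x + y) = lmap m n a x + lmap m n a y.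
Proof. by rewrite /lmap -big_split; apply: eq_bigr => i _; rewrite mulrDr frobD. Qed.

Lemma lmap0 (a : nat -> nat -> F) : lmap m n a 0 = 0.
Proof. by rewrite /lmap big1 // => i _; rewrite mulr0 frob0. Qed.

Lemma lmapFq (a : nat -> nat -> F) : (forall i, (i < m)%N -> Li m n a i 1 \in Fq m F) ->
  {in Fq m F, forall y, lmap m n a y \in Fq m F}.
Proof.
move=> hc y hy; rewrite /lmap; apply: fq_sum => i _.
by apply: fqX; apply: fqM => //; apply: hc.
Qed.

Lemma LadjD (a : nat -> nat -> F) (x y : F) : Ladj m n a (x + y) = Ladj m n a x + Ladj m n a y.
Proof. by rewrite /Ladj -big_split; apply: eq_bigr => k _; rewrite mulrDr /frobinv frobD. Qed.

Lemma Ladj0 (a : nat -> nat -> F) : Ladj m n a 0 = 0.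
Proof. by rewrite /Ladj big1 // => k _; rewrite mulr0 /frobinv frob0. Qed.

Lemma LadjB (a : nat -> nat -> F) (x y : F) : Ladj m n a (x - y) = Ladj m n a x - Ladj m n a y.
Proof. by rewrite !(GRing.subr_pchar2 Hchar) LadjD. Qed.


Lemma divmod_inj i1 i2 j1 j2 : (i1 < m)%N -> (i2 < m)%N ->
  (i1 + m * j1 = i2 + m * j2)%N -> i1 = i2 /\ j1 = j2.
Proof.
move=> h1 h2 e.
have em := congr1 (modn^~ m) e; have ed := congr1 (divn^~ m) e.
rewrite /= (addnC i1) (addnC i2) !(mulnC m) !modnMDl !modn_small // in em.
rewrite /= (addnC i1) (addnC i2) !(mulnC m) !divnMDl // !divn_small // !addn0 in ed.
by [].
Qed.

Lemma fwd (a : nat -> nat -> F) :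
  (forall x, Tr x = 0 -> Tr (Ladj m n a x) = 0) ->
  forall i, (i < m)%N -> Li m n a i 1 \in Fq m F.
Proof.
move=> h.
pose c i := Li m n a i 1.
pose d i := c i ^+ (2 ^ (m * n - m)) + c i.
have hmn : (m <= m * n)%N by rewrite leq_pmulr.
have key : forall z, \sum_(i < m) (Tr (d i * z)) ^+ (2 ^ (m - i)) = 0.
  move=> z; have hz : Tr (z ^+ (2 ^ m) + z) = 0 by rewrite TrD Tr_q addrr_pchar2.
  rewrite -[RHS](h _ hz) TrL; apply: eq_bigr => i _; congr (_ ^+ _).
  rewrite /d mulrDl mulrDr !TrD; congr (_ + _).
  by rewrite -[LHS]Tr_q exprMn -exprM -expnD subnK ?frob_full.
have key2 : forall z, \sum_(i < m) (Tr (d i * z)) ^+ (2 ^ (m - i.+1)) = 0.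
  move=> z.
  have : (\sum_(i < m) (Tr (d i * z)) ^+ (2 ^ (m - i.+1))) ^+ (2 ^ 1) = 0.
    rewrite frob_sum -[RHS](key z); apply: eq_bigr => i _.
    by rewrite -exprM -expnD addn1 subnSK.
  by move/eqP; rewrite expf_eq0 /= => /eqP.
pose E (p : 'I_m * 'I_n) := (m - p.1.+1 + m * p.2)%N.
have key3 : forall z, \sum_(p : 'I_m * 'I_n) d p.1 ^+ (2 ^ E p) * z ^+ (2 ^ E p) = 0.
  move=> z; rewrite -[RHS](key2 z).
  have -> : \sum_(i < m) (Tr (d i * z)) ^+ (2 ^ (m - i.+1)) =
     \sum_(i < m) \sum_(j < n) d i ^+ (2 ^ (m - i.+1 + m * j)) * z ^+ (2 ^ (m - i.+1 + m * j)).
    apply: eq_bigr => i _; rewrite -Tr_frob /Defs.Tr; apply: eq_bigr => j _.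
    by rewrite -exprM -expnD exprMn.
  by rewrite pair_big.
move=> i hi.
have hE : forall p q : 'I_m * 'I_n, E p = E q -> p = q.
  move=> [i1 j1] [i2 j2]; rewrite /E /= => e.
  have h1 := ltn_ord i1; have h2 := ltn_ord i2.
  have l1 : (m - i1.+1 < m)%N by lia.
  have l2 : (m - i2.+1 < m)%N by lia.
  have [e1 e2] := divmod_inj _ _ _ _ l1 l2 e.
  congr (_, _); apply: ord_inj => //; lia.
have inj : injective (fun p => 2 ^ E p)%N.
  by move=> p q /eqP; rewrite eqn_exp2l // => /eqP /hE.
have bnd : forall p, (2 ^ E p < #|F|)%N.
  move=> [i1 j1]; rewrite Hcard ltn_exp2l // /E /=.
  have := ltn_ord i1; have := ltn_ord j1.
  have : (m * j1.+1 <= m * n)%N by rewrite leq_pmul2l.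
  rewrite mulnS; lia.
have hd : d i = 0.
  have := @poly_sparse F _ (fun p : 'I_m * 'I_n => d p.1 ^+ (2 ^ E p)) (fun p => 2 ^ E p)%N inj bnd key3 (Ordinal hi, Ordinal Hn).
  rewrite /=.
  by move/eqP; rewrite expf_eq0 expn_gt0 /= => /eqP.
rewrite inFq -/(c i); apply/eqP.
move: hd; rewrite /d => /eqP; rewrite addr_eq0 (GRing.oppr_pchar2 Hchar) => /eqP hc.
rewrite -{1}hc.
by rewrite -exprM -expnD subnK ?frob_full.
Qed.


Lemma inK x : (x \in KerTr m n F) = (Tr x == 0).
Proof. by rewrite inE. Qed.

Lemma main_sec (a : nat -> nat -> F) :
  ((Ladj m n a @: KerTr m n F \subset KerTr m n F) <->
     (forall i, (i < m)%N -> Li m n a i 1 \in Fq m F)) /\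
  ((Ladj m n a @: KerTr m n F \subset KerTr m n F) ->
     [/\ {in Fq m F, forall y, lmap m n a y \in Fq m F},
         (forall x, Tr (Ladj m n a x) = lmap m n a (Tr x)) &
         (forall l : F -> F, (forall x, Tr (Ladj m n a x) = l (Tr x)) ->
            {in Fq m F, l =1 lmap m n a})]) /\
  ((Ladj m n a @: KerTr m n F \subset KerTr m n F) ->
     induced_well_defined (KerTr m n F) (Ladj m n a) /\
     (induced_bijective (KerTr m n F) (Ladj m n a) <->
        F2_lin_aut (Fq m F) (lmap m n a))) /\
  (#|Ladj m n a @: KerTr m n F| = #|KerTr m n F| <->
     KerTr m n F :&: KerLadj m n a = [set 0]).
Proof.
have part1 : (Ladj m n a @: KerTr m n F \subset KerTr m n F) <->
     (forall i, (i < m)%N -> Li m n a i 1 \in Fq m F).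
  split.
  - move=> /subsetP hs; apply: fwd => x hx.
    apply/eqP; rewrite -inK; apply: hs; apply: imset_f; by rewrite inK hx.
  - move=> hc; apply/subsetP => _ /imsetP [x hx ->].
    by move: hx; rewrite !inK TrL_l // => /eqP ->; rewrite lmap0.
split; first exact: part1.
have iii : (#|Ladj m n a @: KerTr m n F| = #|KerTr m n F| <->
     KerTr m n F :&: KerLadj m n a = [set 0]).
  split.
  - move=> /eqP /imset_injP hinj; apply/setP => x; rewrite in_setI in_set1 inK inE.
    case: (eqVneq x 0) => [->|nx]; first by rewrite Tr0 Ladj0 eqxx.
    apply/negbTE/negP => /andP [hx hl].
    move/eqP: nx; apply; apply: hinj; rewrite ?inK ?Tr0 //.
    by rewrite (eqP hl) Ladj0.
  - move=> hK; apply: card_in_imset => x y hx hy e.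
    apply/eqP; rewrite -subr_eq0; apply/eqP.
    have : x - y \in KerTr m n F :&: KerLadj m n a.
      rewrite in_setI; apply/andP; split.
      + by move: hx hy; rewrite !inK TrB => /eqP -> /eqP ->; rewrite subrr.
      + by rewrite inE LadjB e subrr.
    by rewrite hK in_set1 => /eqP.
have lmapB : forall u v, lmap m n a (u - v) = lmap m n a u - lmap m n a v.
  by move=> u v; rewrite !(GRing.subr_pchar2 Hchar) lmapD.
have H2 : (Ladj m n a @: KerTr m n F \subset KerTr m n F) ->
   (forall i, (i < m)%N -> Li m n a i 1 \in Fq m F) by move/part1.
split.
  move=> /H2 hc; have hL := TrL_l a hc; split; first exact: (lmapFq a hc).
  - exact: hL.
  - move=> l hl y hy; have [x <-] := Tr_surj _ hy; by rewrite -hl hL.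
split; last exact: iii.
move=> /H2 hc; have hL := TrL_l a hc.
split.
  move=> x y; rewrite !inK => /eqP h; by rewrite TrB !hL -lmapB -TrB h lmap0.
split.
- move=> [hinj hsurj]; split.
  + exact: (lmapFq a hc).
  + move=> x y _ _; exact: lmapD.
  + move=> x y hx hy e.
    have [u hu] := Tr_surj _ hx; have [v hv] := Tr_surj _ hy.
    have : u - v \in KerTr m n F by apply: hinj; rewrite inK TrB !hL hu hv e subrr.
    by rewrite inK TrB hu hv subr_eq0 => /eqP.
  + move=> y hy; have [b hb] := Tr_surj _ hy; have [u hu] := hsurj b.
    exists (Tr u); first exact: TrFq.
    by move: hu; rewrite inK TrB hL hb subr_eq0 => /eqP.
- move=> [_ _ hinj hsurj]; split.
  + move=> x y; rewrite !inK TrB !hL subr_eq0 => /eqP e.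
    rewrite TrB subr_eq0; apply/eqP; apply: hinj => //; exact: TrFq.
  + move=> b; have [x hx hxb] := hsurj _ (TrFq b).
    have [u hu] := Tr_surj _ hx; exists u.
    by rewrite inK TrB hL hu hxb subrr.
Qed.

End S.


Theorem mainTheorem6 (m n : nat) (F : finFieldType)
    (Hm : (0 < m)%N) (Hn : (0 < n)%N)
    (Hchar : 2%N \in [pchar F]) (Hcard : #|F| = (2 ^ (m * n))%N)
    (a : nat -> nat -> F) :
  (* (i) *)
  ((Ladj m n a @: KerTr m n F \subset KerTr m n F) <->
     (forall i, (i < m)%N -> Li m n a i 1 \in Fq m F)) /\
  ((Ladj m n a @: KerTr m n F \subset KerTr m n F) ->
     [/\ {in Fq m F, forall y, lmap m n a y \in Fq m F},
         (forall x, Tr m n (Ladj m n a x) = lmap m n a (Tr m n x)) &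
         (forall l : F -> F, (forall x, Tr m n (Ladj m n a x) = l (Tr m n x)) ->
            {in Fq m F, l =1 lmap m n a})]) /\
  (* (ii) *)
  ((Ladj m n a @: KerTr m n F \subset KerTr m n F) ->
     induced_well_defined (KerTr m n F) (Ladj m n a) /\
     (induced_bijective (KerTr m n F) (Ladj m n a) <->
        F2_lin_aut (Fq m F) (lmap m n a))) /\
  (* (iii) *)
  (#|Ladj m n a @: KerTr m n F| = #|KerTr m n F| <->
     KerTr m n F :&: KerLadj m n a = [set 0]).
Proof. exact: main_sec. Qed.
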